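(* Let $n\ge0$ be an integer, $\omega\in\mathbb{R}$ and $\theta_0\in\mathbb{T}$, with $\theta_j=\theta_0+j\omega$. Suppose that for each $0\le k\le n$, $(\Sigma_k,\theta_0)$ is a reversed $(r_k,l_k,a_k)$-system. Then for every integer $t>0$, $$\frac{|\{0\le j<t:\theta_{-j}\in\bigcup_{k=0}^n\Sigma_k\}|}{t}\le\sum_{k=0}^n\Big(\frac{l_k}{t}+\frac{l_k}{r_k+l_k}\Big)$$ and $$\frac{|\{0\le j<t:\theta_{-j}\in\bigcup_{k=0}^n\Sigma_k\}|}{t}\le\sum_{k=0}^n\frac{l_k}{m_k+l_k},\qquad m_k=\min\{a_k,r_k\}.$$
   Context: Fix $\Sigma\subset\mathbb{T}$ and the orbit $\theta_j=\theta_0+j\omega$, $j\in\mathbb{Z}$. $\Sigma$ has minimal return time $r>0$ if every maximal block of consecutive iterates outside $\Sigma$ lying between two visits to $\Sigma$ has length at least $r$; it has maximal confinement time $l>0$ if every block of consecutive iterates all lying in $\Sigma$ has length at most $l$. $(\Sigma,\theta_0)$ is a reversed $(r,l,a)$-system if $\Sigma$ has minimal return time $r$, maximal confinement time $l$, and reversed accumulation time $a\ge0$, meaning $\theta_{-i}\notin\Sigma$ for all $0\le i<a$. *)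

(* Defs.v *)
From Stdlib Require Import Reals Lra Lia ZArith Arith List.
Open Scope R_scope.

(* The circle T = R/Z is represented by its fundamental domain [0,1):
   a point x : R of the real line is projected to T via frac_part x.
   A subset Sigma of T is given by a (boolean) characteristic function on
   representatives in [0,1) (only its values on [0,1) matter). *)
Definition tset := R -> bool.

Definition inT (Sigma : tset) (x : R) : bool := Sigma (frac_part x).

Definition theta (theta0 omega : R) (j : Z) : R := theta0 + IZR j * omega.

Definition visit (Sigma : tset) (theta0 omega : R) (j : Z) : bool :=
  inT Sigma (theta theta0 omega j).

Definition min_return_time (Sigma : tset) (theta0 omega : R) (r : nat) : Prop :=
  forall i j : Z, (i + 1 < j)%Z ->
    visit Sigma theta0 omega i = true ->
    visit Sigma theta0 omega j = true ->
    (forall k : Z, (i < k < j)%Z -> visit Sigma theta0 omega k = false) ->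
    (Z.of_nat r <= j - i - 1)%Z.

Definition max_confinement_time (Sigma : tset) (theta0 omega : R) (l : nat) : Prop :=
  forall (i : Z) (m : nat),
    (forall k : Z, (i <= k < i + Z.of_nat m)%Z -> visit Sigma theta0 omega k = true) ->
    (m <= l)%nat.

Definition rev_accumulation_time (Sigma : tset) (theta0 omega : R) (a : nat) : Prop :=
  forall i : nat, (i < a)%nat -> visit Sigma theta0 omega (- Z.of_nat i)%Z = false.

Definition reversed_system (Sigma : tset) (theta0 omega : R) (r l a : nat) : Prop :=
  (0 < r)%nat /\ (0 < l)%nat /\
  min_return_time Sigma theta0 omega r /\
  max_confinement_time Sigma theta0 omega l /\
  rev_accumulation_time Sigma theta0 omega a.

Definition in_union (Sig : nat -> tset) (n : nat) (theta0 omega : R) (j : nat) : bool :=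
  existsb (fun k => visit (Sig k) theta0 omega (- Z.of_nat j)%Z) (seq 0 (S n)).

Definition back_count (Sig : nat -> tset) (n : nat) (theta0 omega : R) (t : nat) : nat :=
  length (filter (in_union Sig n theta0 omega) (seq 0 t)).

(* Main.v *)
Require Import Defs.
From Stdlib Require Import Reals Lra Lia ZArith Arith List.
Open Scope R_scope.

Fixpoint cnt (f : nat -> bool) (p n : nat) : nat :=
  match n with 0 => 0%nat | S n' => ((if f p then 1 else 0) + cnt f (S p) n')%nat end.

Lemma run_lem (f : nat -> bool) : forall n p, exists b, (b <= n)%nat /\
  (forall k, (p <= k < p + b)%nat -> f k = true) /\ (b = n \/ f (p + b)%nat = false) /\
  cnt f p n = (b + cnt f (p + b) (n - b))%nat.
Proof.
  induction n as [|n IH]; intros p.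
  - exists 0%nat. split; [lia|split; [intros; lia|split; [left; lia|]]]. simpl. reflexivity.
  - destruct (f p) eqn:Hp.
    + destruct (IH (S p)) as [b [Hb [Hr [He Hc]]]].
      exists (S b). split; [lia|split; [|split]].
      * intros k Hk. destruct (Nat.eq_dec k p). subst; auto. apply Hr; lia.
      * destruct He. left; lia. right. replace (p + S b)%nat with (S p + b)%nat by lia; auto.
      * simpl. rewrite Hp, Hc. replace (p + S b)%nat with (S p + b)%nat by lia. lia.
    + exists 0%nat. split; [lia|split; [intros; lia|split; [right; rewrite Nat.add_0_r; auto|]]].
      rewrite Nat.add_0_r, Nat.sub_0_r. reflexivity.
Qed.

Lemma step_lem (f : nat -> bool) : forall n p, cnt f p n = 0%nat \/
  exists q b, (p <= q)%nat /\ (1 <= b)%nat /\ (q + b <= p + n)%nat /\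
   (forall k, (p <= k < q)%nat -> f k = false) /\
   (forall k, (q <= k < q + b)%nat -> f k = true) /\ f q = true /\
   (q + b = p + n \/ f (q + b) = false)%nat /\
   cnt f p n = (b + cnt f (q + b) (p + n - (q + b)))%nat.
Proof.
  induction n as [|n IH]; intros p.
  - left; reflexivity.
  - destruct (f p) eqn:Hp.
    + right. destruct (run_lem f (S n) p) as [b [Hb [Hr [He Hc]]]].
      assert (1 <= b)%nat.
      { destruct b; [|lia]. destruct He as [He|He]. lia. rewrite Nat.add_0_r in He; congruence. }
      exists p, b. split; [lia|split; [lia|split; [lia|split; [intros k Hk; lia|split; [auto|split; [auto|split]]]]]].
      * destruct He. left; lia. right; auto.
      * rewrite Hc. f_equal. f_equal. lia.
    + destruct (IH (S p)) as [H0|[q [b [H1 [H2 [H3 [H4 [H5 [H6 [H7 H8]]]]]]]]]].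
      * left. simpl. rewrite Hp. simpl. auto.
      * right. exists q, b. split; [lia|split; [lia|split; [lia|split; [|split; [auto|split; [auto|split]]]]]].
        -- intros k Hk. destruct (Nat.eq_dec k p). subst; auto. apply H4; lia.
        -- destruct H7. left; lia. right; auto.
        -- simpl. rewrite Hp, H8. simpl. replace (p + S n)%nat with (S p + n)%nat by lia. reflexivity.
Qed.

Section Gen.
Variables (f : nat -> bool) (r l a : nat).
Hypothesis HB : forall i m, (forall k, (i <= k < i + m)%nat -> f k = true) -> (m <= l)%nat.
Hypothesis HG : forall i j, (i + 1 < j)%nat -> f i = true -> f j = true ->
  (forall k, (i < k < j)%nat -> f k = false) -> (r <= j - i - 1)%nat.
Hypothesis HA : forall i, (i < a)%nat -> f i = false.

Lemma rest_lem : forall n p,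
  (forall q, (p <= q)%nat -> f q = true -> (forall k, (p <= k < q)%nat -> f k = false) ->
      (r <= q - p)%nat) ->
  ((r + l) * cnt f p n <= l * n)%nat.
Proof.
  induction n as [n IH] using lt_wf_ind. intros p Hp.
  destruct (step_lem f n p) as [H0|[q [b [H1 [H2 [H3 [H4 [H5 [H6 [H7 H8]]]]]]]]]].
  - rewrite H0. lia.
  - pose proof (HB q b H5) as Hbl. pose proof (Hp q H1 H6 H4) as Hrq.
    rewrite H8. destruct H7 as [H7|H7].
    + rewrite H7, Nat.sub_diag. simpl. nia.
    +
      assert (IH' := IH (p + n - (q + b))%nat ltac:(lia) (q + b)%nat).
      assert ((r + l) * cnt f (q + b) (p + n - (q + b)) <= l * (p + n - (q + b)))%nat.
      { apply IH'. intros q' Hq' Hf Hbt.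
        assert (q' <> q + b)%nat by (intro; subst; congruence).
        assert (Hr := HG (q + b - 1) q' ltac:(lia) ltac:(apply H5; lia) Hf).
        assert (r <= q' - (q + b - 1) - 1)%nat. { apply Hr. intros k Hk. apply Hbt; lia. }
        lia. }
      nia.
Qed.

Lemma bound1 t : ((r + l) * cnt f 0 t <= (r + l) * l + l * t)%nat.
Proof.
  destruct (step_lem f t 0) as [H0|[q [b [H1 [H2 [H3 [H4 [H5 [H6 [H7 H8]]]]]]]]]].
  - rewrite H0. lia.
  - pose proof (HB q b H5) as Hbl. rewrite H8. destruct H7 as [H7|H7].
    + rewrite H7, Nat.sub_diag. simpl. nia.
    + assert ((r + l) * cnt f (q + b) (0 + t - (q + b)) <= l * (0 + t - (q + b)))%nat.
      { apply rest_lem. intros q' Hq' Hf Hbt.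
        assert (q' <> q + b)%nat by (intro; subst; congruence).
        assert (Hr := HG (q + b - 1) q' ltac:(lia) ltac:(apply H5; lia) Hf).
        assert (r <= q' - (q + b - 1) - 1)%nat. { apply Hr. intros k Hk. apply Hbt; lia. }
        lia. }
      nia.
Qed.

Lemma bound2 t : ((Nat.min a r + l) * cnt f 0 t <= l * t)%nat.
Proof.
  destruct (step_lem f t 0) as [H0|[q [b [H1 [H2 [H3 [H4 [H5 [H6 [H7 H8]]]]]]]]]].
  - rewrite H0. lia.
  - pose proof (HB q b H5) as Hbl.
    assert (Hqa : (a <= q)%nat) by (destruct (le_lt_dec a q); auto; rewrite HA in H6; [discriminate|auto]).
    assert (Nat.min a r <= a /\ Nat.min a r <= r)%nat by lia.
    rewrite H8. destruct H7 as [H7|H7].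
    + rewrite H7, Nat.sub_diag. simpl. nia.
    + assert ((r + l) * cnt f (q + b) (0 + t - (q + b)) <= l * (0 + t - (q + b)))%nat.
      { apply rest_lem. intros q' Hq' Hf Hbt.
        assert (q' <> q + b)%nat by (intro; subst; congruence).
        assert (Hr := HG (q + b - 1) q' ltac:(lia) ltac:(apply H5; lia) Hf).
        assert (r <= q' - (q + b - 1) - 1)%nat. { apply Hr. intros k Hk. apply Hbt; lia. }
        lia. }
      nia.
Qed.
End Gen.

Section Sys.
Variables (Sg : tset) (theta0 omega : R) (r l a : nat).
Hypothesis Hs : reversed_system Sg theta0 omega r l a.
Let f := fun j : nat => visit Sg theta0 omega (- Z.of_nat j)%Z.

Lemma sys_HB : forall i m, (forall k, (i <= k < i + m)%nat -> f k = true) -> (m <= l)%nat.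
Proof.
  destruct Hs as [_ [_ [_ [Hc _]]]]. intros i m H.
  destruct m as [|m]; [lia|].
  apply (Hc (- Z.of_nat (i + m))%Z (S m)). intros k Hk.
  assert (Hk' : k = (- Z.of_nat (Z.to_nat (- k)))%Z) by lia.
  rewrite Hk'. apply H. lia.
Qed.

Lemma sys_HG : forall i j, (i + 1 < j)%nat -> f i = true -> f j = true ->
  (forall k, (i < k < j)%nat -> f k = false) -> (r <= j - i - 1)%nat.
Proof.
  destruct Hs as [_ [_ [Hm _]]]. intros i j H1 H2 H3 H4.
  assert (Z.of_nat r <= (- Z.of_nat i) - (- Z.of_nat j) - 1)%Z; [|lia].
  apply Hm; auto. lia. intros k Hk.
  assert (Hk' : k = (- Z.of_nat (Z.to_nat (- k)))%Z) by lia.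
  rewrite Hk'. apply H4. lia.
Qed.

Lemma sys_HA : forall i, (i < a)%nat -> f i = false.
Proof. destruct Hs as [_ [_ [_ [_ Ha]]]]. intros; apply Ha; auto. Qed.

Lemma sys_b1 t : ((r + l) * cnt f 0 t <= (r + l) * l + l * t)%nat.
Proof. apply bound1. apply sys_HB. apply sys_HG. Qed.
Lemma sys_b2 t : ((Nat.min a r + l) * cnt f 0 t <= l * t)%nat.
Proof. apply bound2. apply sys_HB. apply sys_HG. apply sys_HA. Qed.
End Sys.

Lemma cnt_filter (P : nat -> bool) : forall n p, length (filter P (seq p n)) = cnt P p n.
Proof. induction n; intros p; simpl; auto. destruct (P p); simpl; rewrite IHn; auto. Qed.

Fixpoint natsum (g : nat -> nat) (n : nat) : nat :=
  match n with 0 => g 0%nat | S n' => (natsum g n' + g n)%nat end.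

Lemma natsum_add g h n : natsum (fun k => g k + h k)%nat n = (natsum g n + natsum h n)%nat.
Proof. induction n; simpl; lia. Qed.

Lemma natsum_INR g n : INR (natsum g n) = sum_f_R0 (fun k => INR (g k)) n.
Proof. induction n; simpl; auto. rewrite plus_INR, IHn. reflexivity. Qed.

Lemma exists_le (h : nat -> bool) n :
  ((if existsb h (seq 0 (S n)) then 1 else 0) <= natsum (fun k => if h k then 1 else 0) n)%nat.
Proof.
  induction n.
  - simpl. destruct (h 0%nat); simpl; lia.
  - rewrite seq_S, existsb_app.
    change (natsum (fun k => if h k then 1 else 0) (S n))%nat with
      (natsum (fun k => if h k then 1 else 0) n + (if h (S n) then 1 else 0))%nat.
    replace (existsb h ((0 + S n)%nat :: nil)) with (orb (h (S n)) false) by reflexivity.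
    revert IHn. destruct (existsb h (seq 0 (S n))); destruct (h (S n)); simpl; lia.
Qed.

Lemma union_le (h : nat -> nat -> bool) n : forall t p,
  (cnt (fun j => existsb (fun k => h k j) (seq 0 (S n))) p t <= natsum (fun k => cnt (h k) p t) n)%nat.
Proof.
  induction t; intros p.
  - simpl. clear. induction n; simpl; lia.
  - simpl cnt. rewrite natsum_add. pose proof (exists_le (fun k => h k p) n). specialize (IHt (S p)). simpl in H, IHt |- *. revert H IHt. destruct (h 0%nat p || existsb (fun k : nat => h k p) (seq 1 n))%bool; lia.
Qed.

Theorem lemmaB2 (n : nat) (omega theta0 : R) (Sig : nat -> tset)
  (r l a : nat -> nat)
  (Hsys : forall k : nat, (k <= n)%nat ->
     reversed_system (Sig k) theta0 omega (r k) (l k) (a k)) :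
  forall t : nat, (0 < t)%nat ->
    INR (back_count Sig n theta0 omega t) / INR t
      <= sum_f_R0 (fun k => INR (l k) / INR t + INR (l k) / INR (r k + l k)) n
    /\
    INR (back_count Sig n theta0 omega t) / INR t
      <= sum_f_R0 (fun k => INR (l k) / INR (Nat.min (a k) (r k) + l k)) n.
Proof.
  intros t Ht.
  set (c := fun k => cnt (fun j => visit (Sig k) theta0 omega (- Z.of_nat j)%Z) 0 t).
  assert (Hb : (back_count Sig n theta0 omega t <= natsum c n)%nat).
  { unfold back_count. rewrite cnt_filter. unfold in_union.
    apply (union_le (fun k j => visit (Sig k) theta0 omega (- Z.of_nat j)%Z) n t 0). }
  assert (HT : 0 < INR t) by (apply lt_0_INR; lia).
  assert (Hle : INR (back_count Sig n theta0 omega t) / INR t <= sum_f_R0 (fun k => INR (c k) / INR t) n).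
  { replace (sum_f_R0 (fun k => INR (c k) / INR t) n) with (/ INR t * sum_f_R0 (fun k => INR (c k)) n)
      by (rewrite scal_sum; reflexivity).
    rewrite Rmult_comm. unfold Rdiv. apply Rmult_le_compat_r. left; apply Rinv_0_lt_compat; auto.
    rewrite <- natsum_INR. apply le_INR; auto. }
  split; eapply Rle_trans; try apply Hle; apply sum_Rle; intros k Hk.
  - pose proof (Hsys k Hk) as Hs. pose proof (sys_b1 _ _ _ _ _ _ Hs t) as H1.
    fold (c k) in H1. pose proof Hs as [Hr [Hl _]].
    apply le_INR in H1. repeat rewrite ?mult_INR, ?plus_INR in H1. rewrite plus_INR.
    assert (0 < INR (r k)) by (apply lt_0_INR; auto).
    assert (0 < INR (l k)) by (apply lt_0_INR; auto).
    apply Rmult_le_reg_r with (INR t * (INR (r k) + INR (l k))). nra.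
    replace ((INR (l k) / INR t + INR (l k) / (INR (r k) + INR (l k))) * (INR t * (INR (r k) + INR (l k))))
      with (INR (l k) * (INR (r k) + INR (l k)) + INR (l k) * INR t) by (field; lra).
    replace (INR (c k) / INR t * (INR t * (INR (r k) + INR (l k))))
      with ((INR (r k) + INR (l k)) * INR (c k)) by (field; lra).
    nra.
  - pose proof (Hsys k Hk) as Hs. pose proof (sys_b2 _ _ _ _ _ _ Hs t) as H1.
    fold (c k) in H1. pose proof Hs as [Hr [Hl _]].
    apply le_INR in H1. repeat rewrite ?mult_INR, ?plus_INR in H1. rewrite plus_INR.
    assert (0 <= INR (Nat.min (a k) (r k))) by apply pos_INR.
    assert (0 < INR (l k)) by (apply lt_0_INR; auto).
    apply Rmult_le_reg_r with (INR t * (INR (Nat.min (a k) (r k)) + INR (l k))). nra.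
    replace (INR (l k) / (INR (Nat.min (a k) (r k)) + INR (l k)) * (INR t * (INR (Nat.min (a k) (r k)) + INR (l k))))
      with (INR (l k) * INR t) by (field; lra).
    replace (INR (c k) / INR t * (INR t * (INR (Nat.min (a k) (r k)) + INR (l k))))
      with ((INR (Nat.min (a k) (r k)) + INR (l k)) * INR (c k)) by (field; lra).
    lra.
Qed.
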